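(* Let $G$ be a crown-free linear $3$-graph on $n$ vertices, and let $s$ be the number of vertices of $G$ of degree at least $6$. If $s \leq 2$, then the number of edges of $G$ satisfies $$|E(G)| \leq \frac{10(n-s)}{7}.$$
   Context: A linear $3$-graph $G=(V,E)$ consists of a finite vertex set $V$ and a collection $E$ of $3$-element subsets of $V$ (edges) such that any two distinct edges share at most one vertex. The degree $d(v)$ of a vertex $v$ is the number of edges containing $v$. The crown $C_{13}$ is the linear $3$-graph on $9$ vertices $\{a,b,c,d,e,f,g,h,i\}$ with edges $\{a,b,c\},\{a,d,e\},\{b,f,g\},\{c,h,i\}$. A linear $3$-graph is crown-free if it contains no copy of $C_{13}$, i.e. no four of its edges together with an injective assignment of the nine vertices form the crown. *)

(* Defs.v *)
From mathcomp Require Import all_boot.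
Set Implicit Arguments. Unset Strict Implicit. Unset Printing Implicit Defensive.

Definition linear_3graph (V : finType) (E : {set {set V}}) : Prop :=
  (forall e, e \in E -> #|e| = 3) /\
  (forall e f, e \in E -> f \in E -> e != f -> #|e :&: f| <= 1).

Definition deg (V : finType) (E : {set {set V}}) (v : V) : nat :=
  #|[set e in E | v \in e]|.

Definition has_crown (V : finType) (E : {set {set V}}) : Prop :=
  exists a b c d e f g h i : V,
    uniq [:: a; b; c; d; e; f; g; h; i] /\
    [set a; b; c] \in E /\ [set a; d; e] \in E /\
    [set b; f; g] \in E /\ [set c; h; i] \in E.

Definition crown_free (V : finType) (E : {set {set V}}) : Prop :=
  ~ has_crown E.

(* Main.v *)
Require Import Defs.
From mathcomp Require Import all_boot.
From mathcomp Require Import zify.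
Set Implicit Arguments. Unset Strict Implicit. Unset Printing Implicit Defensive.

Section Crown.
Variables (V : finType) (E : {set {set V}}).
Hypothesis Hlin : linear_3graph E.
Hypothesis Hcf : crown_free E.

Local Notation d := (deg E).
Definition Ed (x : V) := [set f in E | x \in f].

Lemma dE x : d x = #|Ed x|. Proof. by []. Qed.

Lemma card3 (f : {set V}) : f \in E -> #|f| = 3.
Proof. by case: Hlin => H _; apply: H. Qed.

Lemma lin (f g : {set V}) (u w : V) : f \in E -> g \in E -> u != w ->
  u \in f -> w \in f -> u \in g -> w \in g -> f = g.
Proof.
move=> Hf Hg uw uf wf ug wg; apply/eqP; apply: contraT => fg.
case: Hlin => _ /(_ f g Hf Hg fg) H.
have : [set u; w] \subset f :&: g by apply/subsetP => z; rewrite !inE => /orP[]/eqP->; rewrite ?uf ?ug ?wf ?wg.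
move/subset_leq_card; rewrite cards2 uw => H2.
by have := leq_trans H2 H.
Qed.

Lemma dis (A B : {set V}) u w : A :&: B = set0 -> u \in A -> w \in B -> u != w.
Proof.
move=> H uA wB; apply/eqP => uw; move: H; subst w.
by move/setP/(_ u); rewrite !inE uA wB.
Qed.

Lemma three (f : {set V}) (x : V) : #|f| = 3 -> x \in f ->
  exists a b, [/\ f = [set x; a; b], x != a, x != b & a != b].
Proof.
move=> Hf xf.
have : #|f :\ x| == 2 by move: Hf; rewrite (cardsD1 x) xf add1n => [[->]].
case/cards2P => a [b [ab Hab]].
have ax : a != x.
  apply/negP => /eqP ax; have : a \in f :\ x by rewrite Hab !inE eqxx.
  by rewrite ax !inE eqxx.
have bx : b != x.
  apply/negP => /eqP bx; have : b \in f :\ x by rewrite Hab !inE eqxx orbT.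
  by rewrite bx !inE eqxx.
exists a, b; split; rewrite ?(eq_sym x) //.
apply/setP => z; rewrite !inE; case: (z =P x) => [-> |/eqP zx]; first by rewrite xf.
have := (congr1 (fun S : {set V} => z \in S) Hab); rewrite !inE zx /= => ->.
by [].
Qed.


Lemma three_eq (f : {set V}) x y z : #|f| = 3 -> x \in f -> y \in f -> z \in f ->
  x != y -> x != z -> y != z -> f = [set x; y; z].
Proof.
move=> Hf xf yf zf xy xz yz; apply/eqP; rewrite eq_sym eqEcard.
apply/andP; split.
  by apply/subsetP => u; rewrite !inE => /orP[/orP[]|]/eqP->.
by rewrite Hf -setUA cardsU1 cards2 !inE negb_or xy xz yz.
Qed.

Ltac neqt := first [ by []
  | by rewrite eq_sym
  | match goal with
    | H : ?A :&: ?B = set0 |- is_true (?u != ?w) =>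
        first [ by apply: (dis H) | by rewrite eq_sym; apply: (dis H) ]
    end ].

Lemma crown3 (e fx fy fz : {set V}) (x y z : V) :
  e \in E -> x \in e -> y \in e -> z \in e -> x != y -> x != z -> y != z ->
  fx \in E -> fy \in E -> fz \in E -> x \in fx -> y \in fy -> z \in fz ->
  fx :&: fy = set0 -> fx :&: fz = set0 -> fy :&: fz = set0 -> False.
Proof.
move=> He xe ye ze xy xz yz Hx Hy Hz xfx yfy zfz D12 D13 D23.
have He3 := three_eq (card3 He) xe ye ze xy xz yz.
have [a1 [a2 [Ex xa1 xa2 a12]]] := three (card3 Hx) xfx.
have [b1 [b2 [Ey yb1 yb2 b12]]] := three (card3 Hy) yfy.
have [c1 [c2 [Ez zc1 zc2 c12]]] := three (card3 Hz) zfz.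
apply: Hcf; exists x, y, z, a1, a2, b1, b2, c1, c2.
rewrite -He3 -Ex -Ey -Ez; split => //.
have a1f : a1 \in fx by rewrite Ex !inE eqxx !orbT.
have a2f : a2 \in fx by rewrite Ex !inE eqxx !orbT.
have b1f : b1 \in fy by rewrite Ey !inE eqxx !orbT.
have b2f : b2 \in fy by rewrite Ey !inE eqxx !orbT.
have c1f : c1 \in fz by rewrite Ez !inE eqxx !orbT.
have c2f : c2 \in fz by rewrite Ez !inE eqxx !orbT.
rewrite /= !inE !negb_or.
repeat (apply/andP; split); neqt.
Qed.

Lemma pigeon (A : {set {set V}}) (X : {set V}) :
  (forall g, g \in A -> g :&: X != set0) ->
  (forall g g', g \in A -> g' \in A -> g != g' -> g :&: g' :&: X = set0) ->
  #|A| <= #|X|.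
Proof.
move=> H1 H2; case: (set_0Vmem X) => [X0 | [x0 _]].
  suff -> : A = set0 by rewrite cards0.
  apply/setP => g; rewrite inE; apply/negP => gA; have := H1 _ gA.
  by rewrite X0 setI0 eqxx.
pose f (g : {set V}) := odflt x0 [pick u in g :&: X].
have fP g : g \in A -> f g \in g :&: X.
  move=> gA; rewrite /f; case: pickP => [u -> //| H0] /=.
  by have := H1 _ gA; case/set0Pn => u; rewrite H0.
have inj : {in A &, injective f}.
  move=> g g' gA g'A fgg; apply/eqP; apply: contraT => gg.
  have := H2 _ _ gA g'A gg; move/setP/(_ (f g)).
  have := fP _ gA; have := fP _ g'A; rewrite -fgg !inE => /andP[-> _] /andP[-> ->].
  by rewrite ?inE.
rewrite -(card_in_imset inj); apply: subset_leq_card.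
apply/subsetP => u /imsetP [g gA ->]; have := fP _ gA; rewrite inE => /andP[].
by [].
Qed.

Lemma avoid x (S : {set V}) : x \notin S ->
  #|[set f in Ed x | f :&: S != set0]| <= #|S|.
Proof.
move=> xS; apply: pigeon => [g|g g']; first by rewrite inE => /andP[].
rewrite !inE => /andP[/andP[gE xg] _] /andP[/andP[g'E xg'] _] gg.
apply/setP => u; rewrite !inE; apply/negP => /andP[/andP[ug ug'] uS].
have ux : u != x by apply: contraNneq xS => <-.
by move/eqP: gg; apply; apply: (lin gE g'E ux).
Qed.

Lemma card_split (T : finType) (A : {set T}) (p : pred T) :
  #|A| = #|[set f in A | p f]| + #|[set f in A | ~~ p f]|.
Proof.
rewrite -(cardsID [set f | p f] A); congr (_ + _); apply: eq_card => f; rewrite !inE.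
  by []. by rewrite andbC.
Qed.

Lemma pick_avoid x (S : {set V}) (K : {set {set V}}) : x \notin S ->
  #|S| + #|K| < d x ->
  exists f, [/\ f \in E, x \in f, f :&: S = set0 & f \notin K].
Proof.
move=> xS Hc.
have H1 := avoid xS.
have H2 := card_split (Ed x) (fun f => f :&: S != set0).
have : #|K| < #|[set f in Ed x | ~~ (f :&: S != set0)]| by rewrite dE in Hc; lia.
move=> Hlt.
have : ~~ ([set f in Ed x | ~~ (f :&: S != set0)] \subset K).
  by apply: contraTN Hlt => /subset_leq_card; rewrite leqNgt.
case/subsetPn => f; rewrite !inE negbK => /andP[/andP[fE xf] /eqP fS] fK.
by exists f.
Qed.


Lemma disj (U : finType) (A B : {set U}) : (forall u, u \in A -> u \in B -> False) -> A :&: B = set0.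
Proof.
move=> H; apply/setP => u; rewrite !inE; apply/negP => /andP[uA uB]; exact: H uA uB.
Qed.

Lemma other (e f : {set V}) u w : e \in E -> f \in E -> u \in e -> w \in e -> u != w ->
  u \in f -> f != e -> w \notin f.
Proof.
move=> He Hf ue we uw uf fe; apply/negP => wf; move/eqP: fe; apply.
exact: (lin Hf He uw).
Qed.

Lemma third (z : {set V}) q h : z \in E -> q \in z -> h \in z -> q != h ->
  exists c, [/\ z = [set q; h; c], c != q & c != h].
Proof.
move=> zE qz hz qh; have [c1 [c2 [Ez qc1 qc2 c12]]] := three (card3 zE) qz.
move: hz; rewrite Ez !inE (eq_sym h q) (negbTE qh) /= => /orP[]/eqP hc; subst h.
  by exists c2; split => //; rewrite eq_sym.
exists c1; split => //; try by rewrite eq_sym.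
by apply/setP => u; rewrite !inE; case: (u == c1); case: (u == c2); rewrite ?orbT.
Qed.

Lemma cardD1_3 (f : {set V}) u : f \in E -> u \in f -> #|f :\ u| = 2.
Proof. by move=> fE uf; have := card3 fE; rewrite (cardsD1 u) uf => [[]]. Qed.

Lemma cardU_le (A B : {set V}) : #|A :|: B| <= #|A| + #|B|.
Proof. exact: (leq_card_setU A B).1. Qed.

Lemma uniq_edge (c : V) (z g : {set V}) : d c <= 1 -> z \in E -> c \in z ->
  g \in E -> c \in g -> g = z.
Proof.
move=> dc zE cz gE cg; apply/eqP; apply: contraT => gz.
have : [set g; z] \subset Ed c by apply/subsetP => f; rewrite !inE => /orP[]/eqP->; rewrite ?gE ?cg ?zE ?cz.
by move/subset_leq_card; rewrite cards2 gz -dE; lia.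
Qed.

Lemma Hedge (e : {set V}) h u w : e \in E -> h \in e -> u \in e -> w \in e ->
  h != u -> h != w -> u != w -> 6 <= d h -> 2 <= d u -> 4 <= d w -> False.
Proof.
move=> eE he ue we hu hw uw dh du dw.
have [fu [fuE ufu fu0 fue]] := @pick_avoid u set0 [set e] ltac:(by rewrite in_set0)
  ltac:(by rewrite cards0 cards1).
rewrite inE in fue.
have wfu : w \notin fu := other eE fuE ue we uw ufu fue.
have hfu : h \notin fu := other eE fuE ue he ltac:(by rewrite eq_sym) ufu fue.
have [fw [fwE wfw fw0 fwe]] := @pick_avoid w (fu :\ u) [set e]
  ltac:(by rewrite inE negb_and wfu orbT) ltac:(by rewrite cards1 (cardD1_3 fuE ufu)).
rewrite inE in fwe.
have ufw : u \notin fw := other eE fwE we ue ltac:(by rewrite eq_sym) wfw fwe.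
have hfw : h \notin fw := other eE fwE we he ltac:(by rewrite eq_sym) wfw fwe.
have [fh [fhE hfh fh0 fhe]] := @pick_avoid h ((fu :\ u) :|: (fw :\ w)) [set e]
  ltac:(by rewrite !inE negb_or !negb_and hfu hfw !orbT)
  ltac:(by rewrite cards1; have := cardU_le (fu :\ u) (fw :\ w); rewrite (cardD1_3 fuE ufu) (cardD1_3 fwE wfw) => HH; clear -dh HH; lia).
rewrite inE in fhe.
have ufh : u \notin fh := other eE fhE he ue hu hfh fhe.
have wfh : w \notin fh := other eE fhE he we hw hfh fhe.
apply: (crown3 eE he ue we hu hw uw fhE fuE fwE hfh ufu wfw).
- apply: disj => z zh zu; have [zu'|zu'] := eqVneq z u; first by subst; rewrite zh in ufh.
  by move/setP/(_ z): fh0; rewrite !inE zh zu zu'.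
- apply: disj => z zh zw; have [zw'|zw'] := eqVneq z w; first by subst; rewrite zh in wfh.
  by move/setP/(_ z): fh0; rewrite !inE zh zw zw' orbT.
- apply: disj => z zu zw; have [zu'|zu'] := eqVneq z u; first by subst; rewrite zw in ufw.
  by move/setP/(_ z): fw0; rewrite !inE zu zw zu'.
Qed.


Lemma dneq x y : d x != d y -> x != y.
Proof. by apply: contraNneq => ->. Qed.

Lemma LQ (e f : {set V}) a p q h : e \in E -> a \in e -> p \in e -> q \in e ->
  a != p -> a != q -> p != q -> d p = 5 -> d q = 5 -> d a = 3 ->
  f \in E -> a \in f -> h \in f -> 6 <= d h -> False.
Proof.
move=> eE ae pe qe ap aq pq dp dq da fE af hf dh.
have hp : h != p by apply: dneq; rewrite dp; apply/eqP => H; rewrite H in dh.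
have hq : h != q by apply: dneq; rewrite dq; apply/eqP => H; rewrite H in dh.
have ha : h != a by apply: dneq; rewrite da; apply/eqP => H; rewrite H in dh.
have fe : f != e by apply/eqP => fe; subst f; move: hf; rewrite (three_eq (card3 eE) ae pe qe ap aq pq) !inE (negbTE ha) (negbTE hp) (negbTE hq).
have pf : p \notin f := other eE fE ae pe ap af fe.
have qf : q \notin f := other eE fE ae qe aq af fe.
have [y [yE py y0 ye]] := @pick_avoid p (f :\ a) [set e] ltac:(by rewrite inE negb_and pf orbT)
  ltac:(by rewrite cards1 (cardD1_3 fE af) dp).
rewrite inE in ye.
have ay : a \notin y := other eE yE pe ae ltac:(by rewrite eq_sym) py ye.
have qy : q \notin y := other eE yE pe qe pq py ye.
have yf : y :&: f = set0.
  apply: disj => z zy zf; have [za|za] := eqVneq z a; first by subst; rewrite zy in ay.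
  by move/setP/(_ z): y0; rewrite !inE zy zf za.
case: (boolP [exists zh in E, (q \in zh) && (h \in zh)]) => [/exists_inP [zh zhE /andP[qzh hzh]] | nex]; last first.
  have hfa : h \in f :\ a by rewrite !inE ha hf.
  have cS : #|(f :\ a) :\ h| = 1 by have := cardD1_3 fE af; rewrite (cardsD1 h) hfa => [[]].
  have [z [zE qz z0 ze]] := @pick_avoid q (((f :\ a) :\ h) :|: (y :\ p)) [set e]
    ltac:(by rewrite !inE negb_or !negb_and qf qy !orbT)
    ltac:(by rewrite cards1 dq; have := cardU_le ((f :\ a) :\ h) (y :\ p); rewrite cS (cardD1_3 yE py) => HH; clear -HH; lia).
  rewrite inE in ze.
  have hz : h \notin z by apply/negP => hz; move/negP: nex; apply; apply/exists_inP; exists z; rewrite ?qz ?hz.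
  have az : a \notin z := other eE zE qe ae ltac:(by rewrite eq_sym) qz ze.
  have pz : p \notin z := other eE zE qe pe ltac:(by rewrite eq_sym) qz ze.
  apply: (crown3 eE ae pe qe ap aq pq fE yE zE af py qz); first by rewrite setIC.
  - apply: disj => w wf wz; have [wa|wa] := eqVneq w a; first by subst; rewrite wz in az.
    have [wh|wh] := eqVneq w h; first by subst; rewrite wz in hz.
    by move/setP/(_ w): z0; rewrite !inE wz wf wa wh.
  - apply: disj => w wy wz; have [wp|wp] := eqVneq w p; first by subst; rewrite wz in pz.
    by move/setP/(_ w): z0; rewrite !inE wz wy wp orbT.
have [c [Ezh cq ch]] := third zhE qzh hzh ltac:(by rewrite eq_sym).
have czh : c \in zh by rewrite Ezh !inE eqxx !orbT.
have dc : d c <= 1.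
  rewrite leqNgt; apply/negP => dc.
  apply: (Hedge zhE hzh czh qzh ltac:(by rewrite eq_sym) hq cq dh dc); by rewrite dq.
have pc : p != c by apply: dneq; rewrite dp; apply/eqP => H; rewrite -H in dc.
have ac : a != c by apply: dneq; rewrite da; apply/eqP => H; rewrite -H in dc.
have [g [gE ag g0 gK]] := @pick_avoid a set0 [set e; f] ltac:(by rewrite in_set0)
  ltac:(by rewrite cards0 cards2 da; case: (e != f)).
move: gK; rewrite !inE negb_or => /andP[ge gf].
have pg : p \notin g := other eE gE ae pe ap ag ge.
have qg : q \notin g := other eE gE ae qe aq ag ge.
have hg : h \notin g := other fE gE af hf ltac:(by rewrite eq_sym) ag gf.
have [x [xE px x0 xe]] := @pick_avoid p ((g :\ a) :|: [set h]) [set e]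
  ltac:(by rewrite !inE negb_or negb_and pg orbT eq_sym hp)
  ltac:(by rewrite cards1 dp; have := cardU_le (g :\ a) [set h]; rewrite cards1 (cardD1_3 gE ag) => HH; clear -HH; lia).
rewrite inE in xe.
have ax : a \notin x := other eE xE pe ae ltac:(by rewrite eq_sym) px xe.
have qx : q \notin x := other eE xE pe qe pq px xe.
have hx : h \notin x by apply/negP => hx; move/setP/(_ h): x0; rewrite !inE hx eqxx orbT.
have cx : c \notin x.
  apply/negP => cx; have xz := uniq_edge dc zhE czh xE cx.
  by move: px; rewrite xz Ezh !inE (negbTE pq) (negbTE pc) eq_sym (negbTE hp).
have cg : c \notin g.
  apply/negP => cg; have gz := uniq_edge dc zhE czh gE cg.
  by move: ag; rewrite gz Ezh !inE (negbTE aq) (negbTE ac) eq_sym (negbTE ha).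
apply: (crown3 eE ae pe qe ap aq pq gE xE zhE ag px qzh).
- apply: disj => w wg wx; have [wa|wa] := eqVneq w a; first by subst; rewrite wx in ax.
  by move/setP/(_ w): x0; rewrite !inE wx wg wa.
- apply: disj => w wg; rewrite Ezh !inE => /orP[/orP[]|]/eqP ?; subst w.
  + by rewrite wg in qg.
  + by rewrite wg in hg.
  + by rewrite wg in cg.
- apply: disj => w wx; rewrite Ezh !inE => /orP[/orP[]|]/eqP ?; subst w.
  + by rewrite wx in qx.
  + by rewrite wx in hx.
  + by rewrite wx in cx.
Qed.



Definition TT (VE : {set {set V}}) (x : {set V}) := [set g in VE | g :&: x != set0].

Lemma uniq_in (x g : {set V}) z c c' : x \in E -> g \in E -> z \in x -> z \notin g ->
  c \in x -> c \in g -> c' \in x -> c' \in g -> c = c'.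
Proof.
move=> xE gE zx zg cx cg c'x c'g; apply/eqP; apply: contraT => cc.
have xg := lin xE gE cc cx c'x cg c'g; by rewrite -xg zx in zg.
Qed.

Lemma uniq_card (T : finType) (s : seq T) (S : {set T}) : uniq s -> {subset s <= S} -> size s <= #|S|.
Proof. move=> us sub; rewrite cardE; apply: uniq_leq_size => // x xs; rewrite mem_enum; exact: sub. Qed.

Lemma memneq (U : finType) (S : {set U}) a b : a \in S -> b \notin S -> a != b.
Proof. by move=> aS bS; apply: contraNneq bS => <-. Qed.

Lemma setD_inj (U : finType) (A B C : {set U}) : A \subset C -> B \subset C ->
  C :\: A = C :\: B -> A = B.
Proof.
move=> AC BC H; apply/setP => z; have := congr1 (fun S : {set U} => z \in S) H.
rewrite !inE; case zC: (z \in C); last first.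
  by rewrite (negbTE (contraFN (subsetP AC z) zC)) (negbTE (contraFN (subsetP BC z) zC)).
by rewrite !andbT => /negb_inj.
Qed.

Section Heavy.
Variables (v p q : V) (e1 : {set V}).
Set Default Proof Using "All".
Hypotheses (e1E : e1 \in E) (ve1 : v \in e1) (pe1 : p \in e1) (qe1 : q \in e1)
  (vp : v != p) (vq : v != q) (pq : p != q) (dv : d v = 5) (dp : 4 <= d p) (dq : 4 <= d q).
Local Notation VE := (Ed v :\ e1).
Local Notation T := (TT VE).

Lemma VEP g : g \in VE -> [/\ g \in E, v \in g, g != e1, p \notin g & q \notin g].
Proof.
rewrite !inE => /andP[ge /andP[gE vg]]; split => //.
  exact: other e1E gE ve1 pe1 vp vg ge.
exact: other e1E gE ve1 qe1 vq vg ge.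
Qed.

Lemma cardVE : #|VE| = 4.
Proof. by have := dv; rewrite dE (cardsD1 e1) inE e1E ve1 => [[]]. Qed.

Lemma Pedge x : x \in E -> p \in x -> x != e1 -> v \notin x /\ q \notin x.
Proof.
move=> xE px xe; split.
  exact: other e1E xE pe1 ve1 ltac:(by rewrite eq_sym) px xe.
exact: other e1E xE pe1 qe1 pq px xe.
Qed.

Lemma Qedge y : y \in E -> q \in y -> y != e1 -> v \notin y /\ p \notin y.
Proof.
move=> yE qy ye; split.
  exact: other e1E yE qe1 ve1 ltac:(by rewrite eq_sym) qy ye.
exact: other e1E yE qe1 pe1 ltac:(by rewrite eq_sym) qy ye.
Qed.

Lemma partner x : x \in E -> p \in x -> x != e1 ->
  exists y, [/\ y \in E, q \in y, y != e1 & x :&: y = set0].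
Proof.
move=> xE px xe; have [vx qx] := Pedge xE px xe.
have [y [yE qy y0 ye]] := @pick_avoid q (x :\ p) [set e1]
  ltac:(by rewrite inE negb_and qx orbT) ltac:(by rewrite cards1 (cardD1_3 xE px); clear -dq; lia).
rewrite inE in ye; exists y; split => //.
have [_ py] := Qedge yE qy ye.
apply: disj => u ux uy; have [up|up] := eqVneq u p; first by subst; rewrite uy in py.
by move/setP/(_ u): y0; rewrite !inE uy ux up.
Qed.

Lemma cover x y : x \in E -> p \in x -> x != e1 -> y \in E -> q \in y -> y != e1 ->
  x :&: y = set0 -> forall g, g \in VE -> g :&: (x :|: y) != set0.
Proof.
move=> xE px xe yE qy ye xy g gV; have [gE vg ge pg qg] := VEP gV.
apply/negP => /eqP g0.
apply: (crown3 e1E ve1 pe1 qe1 vp vq pq gE xE yE vg px qy) => //.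
- apply: disj => u ug ux; by move/setP/(_ u): g0; rewrite !inE ug ux.
- apply: disj => u ug uy; by move/setP/(_ u): g0; rewrite !inE ug uy orbT.
Qed.

Lemma cnt4 (X : {set V}) : v \notin X -> (forall g, g \in VE -> g :&: X != set0) -> 4 <= #|X|.
Proof.
move=> vX H; rewrite -cardVE; apply: pigeon => // g g' gV g'V gg.
have [gE vg _ _ _] := VEP gV; have [g'E vg' _ _ _] := VEP g'V.
apply: disj => u; rewrite inE => /andP[ug ug'] uX.
have uv : u != v by apply: contraNneq vX => <-.
by move/eqP: gg; apply; apply: (lin gE g'E uv).
Qed.

Lemma grp x u : x \in E -> p \in x -> x != e1 -> u \in x -> u != p ->
  exists2 g, g \in VE & u \in g.
Proof.
move=> xE px xe ux up.
have [y [yE qy ye xy]] := partner xE px xe.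
have [vx qx] := Pedge xE px xe; have [vy py] := Qedge yE qy ye.
case: (boolP [exists g in VE, u \in g]) => [/exists_inP [g gV ug] | nex]; first by exists g.
exfalso.
have H4 := @cnt4 (((x :\ p) :|: (y :\ q)) :\ u).
have uX : u \in (x :\ p) :|: (y :\ q) by rewrite !inE up ux.
have : #|((x :\ p) :|: (y :\ q)) :\ u| <= 3.
  have := cardU_le (x :\ p) (y :\ q); rewrite (cardD1_3 xE px) (cardD1_3 yE qy).
  rewrite [#|(x :\ p) :|: (y :\ q)|](cardsD1 u) uX => HH; clear -HH; lia.
suff : 4 <= #|((x :\ p) :|: (y :\ q)) :\ u| by move=> H1 H2; have := leq_trans H1 H2.
apply: H4.
  by rewrite !inE negb_and negb_or !negb_and vx vy !orbT.
move=> g gV; have [gE vg _ pg qg] := VEP gV.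
have := cover xE px xe yE qy ye xy gV; case/set0Pn => w; rewrite !inE => /andP[wg wxy].
have wu : w != u.
  apply: contraNneq nex => wu; apply/exists_inP; exists g => //; by rewrite -wu.
apply/set0Pn; exists w; rewrite !inE wu wg /=.
case/orP: wxy => [wx|wy]; apply/orP; [left|right]; rewrite ?wx ?wy andbT.
  by apply: contraNneq pg => <-.
by apply: contraNneq qg => <-.
Qed.

Lemma Tdisj x y : x \in E -> p \in x -> x != e1 -> y \in E -> q \in y -> y != e1 ->
  x :&: y = set0 -> T x :&: T y = set0.
Proof.
move=> xE px xe yE qy ye xy.
have [vx qx] := Pedge xE px xe; have [vy py] := Qedge yE qy ye.
apply: disj => g0 /setIdP [g0V /set0Pn [u1]]; rewrite inE => /andP[u1g u1x].
move=> /setIdP [_ /set0Pn [u2]]; rewrite inE => /andP[u2g u2y].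
have [g0E vg0 _ pg0 qg0] := VEP g0V.
have u12 : u1 != u2 by apply: (dis xy).
have u2X : u2 \in (x :\ p) :|: (y :\ q).
  by rewrite !inE u2y andbT orbC; apply/orP; left; apply: contraNneq qg0 => <-.
have : #|((x :\ p) :|: (y :\ q)) :\ u2| <= 3.
  have := cardU_le (x :\ p) (y :\ q); rewrite (cardD1_3 xE px) (cardD1_3 yE qy).
  rewrite [#|(x :\ p) :|: (y :\ q)|](cardsD1 u2) u2X => HH; clear -HH; lia.
suff : 4 <= #|((x :\ p) :|: (y :\ q)) :\ u2| by move=> H1 H2; have := leq_trans H1 H2.
apply: cnt4; first by rewrite !inE negb_and negb_or !negb_and vx vy !orbT.
move=> g gV; have [gE vg _ pg qg] := VEP gV.
have := cover xE px xe yE qy ye xy gV; case/set0Pn => w; rewrite !inE => /andP[wg wxy].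
have [wu|wu] := eqVneq w u2.
  subst w; have gg0 : g = g0.
    apply: (lin gE g0E (u := v) (w := u2)) => //; apply: contraNneq vy => ->; done.
  subst g; apply/set0Pn; exists u1.
  have u1p : u1 \in x :\ p by rewrite in_setD1 u1x andbT; apply: contraNneq pg0 => <-.
  by rewrite in_setI u1g /= in_setD1 u12 /= in_setU u1p.
apply/set0Pn; exists w; rewrite !inE wu wg /=.
case/orP: wxy => [wx|wy]; apply/orP; [left|right]; rewrite ?wx ?wy andbT.
  by apply: contraNneq pg => <-.
by apply: contraNneq qg => <-.
Qed.

Lemma Tsub x : T x \subset VE.
Proof. by apply/subsetP => g; rewrite inE => /andP[]. Qed.

Lemma Tcomp x y : x \in E -> p \in x -> x != e1 -> y \in E -> q \in y -> y != e1 ->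
  x :&: y = set0 -> T y = VE :\: T x.
Proof.
move=> xE px xe yE qy ye xy; have Hd := Tdisj xE px xe yE qy ye xy.
apply/setP => g; apply/idP/idP.
  move=> gy; have gV : g \in VE by move: gy; rewrite inE => /andP[].
  rewrite inE gV andbT; apply/negP => gx.
  by move/setP/(_ g): Hd; rewrite inE gx gy inE.
rewrite inE => /andP[gx gV]; rewrite inE gV /=.
have := cover xE px xe yE qy ye xy gV; case/set0Pn => w; rewrite !inE => /andP[wg /orP[wx|wy]].
  by move: gx; rewrite inE gV /= negbK => /eqP/setP/(_ w); rewrite !inE wg wx.
by apply/set0Pn; exists w; rewrite inE wg wy.
Qed.

Lemma Tcard x : x \in E -> p \in x -> x != e1 -> #|T x| = 2.
Proof.
move=> xE px xe; have [vx qx] := Pedge xE px xe.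
have [u1 [u2 [Ex pu1 pu2 u12]]] := three (card3 xE) px.
have u1x : u1 \in x by rewrite Ex !inE eqxx !orbT.
have u2x : u2 \in x by rewrite Ex !inE eqxx !orbT.
have [g1 g1V u1g1] := grp xE px xe u1x ltac:(by rewrite eq_sym).
have [g2 g2V u2g2] := grp xE px xe u2x ltac:(by rewrite eq_sym).
have [g1E vg1 _ pg1 _] := VEP g1V; have [g2E vg2 _ pg2 _] := VEP g2V.
have g12 : g1 != g2.
  apply/eqP => g12; subst g2; have := lin xE g1E u12 u1x u2x u1g1 u2g2.
  by move=> xg; move: vx; rewrite xg vg1.
suff -> : T x = [set g1; g2] by rewrite cards2 g12.
apply/setP => g; rewrite in_set2; apply/setIdP/orP.
  case=> gV /set0Pn [w]; rewrite inE => /andP[wg wx].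
  have [gE vg _ pg _] := VEP gV.
  have wv : w != v by apply: contraNneq vx => <-.
  move: wx; rewrite Ex !inE => /orP[/orP[]|]/eqP ww; subst w.
  - by rewrite wg in pg.
  - by left; apply/eqP; apply: (lin gE g1E wv).
  - by right; apply/eqP; apply: (lin gE g2E wv).
case=> /eqP ->; split => //; apply/set0Pn; [exists u1 | exists u2]; by rewrite inE ?u1g1 ?u2g2 ?u1x ?u2x.
Qed.

Lemma atmost2 g : g \in VE -> #|[set x in Ed p :\ e1 | g \in T x]| <= 2.
Proof.
move=> gV; have [gE vg _ pg _] := VEP gV.
rewrite -(cardD1_3 gE vg); apply: pigeon.
  move=> x /setIdP [/setD1P [xe /setIdP [xE px]] /setIdP [_ /set0Pn [w]]].
  rewrite inE => /andP[wg wx]; have [vx _] := Pedge xE px xe.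
  by apply/set0Pn; exists w; rewrite !inE wx wg andbT; apply: contraNneq vx => <-.
move=> x x' /setIdP [/setD1P [xe /setIdP [xE px]] _] /setIdP [/setD1P [x'e /setIdP [x'E px']] _] xx.
apply: disj => u; rewrite !inE => /andP[ux ux'] /andP[_ ug].
have up : u != p by apply: contraNneq pg => <-.
by move/eqP: xx; apply; apply: (lin xE x'E up).
Qed.

Lemma inT (g x : {set V}) (c : V) : g \in VE -> c \in g -> c \in x -> g \in T x.
Proof. by move=> gV cg cx; rewrite inE gV; apply/set0Pn; exists c; rewrite inE cg cx. Qed.

Lemma meet (x y : {set V}) : x \in E -> p \in x -> x != e1 -> y \in E -> q \in y -> y != e1 ->
  T x :&: T y != set0 -> exists c g, [/\ c \in x, c \in y, g \in VE & c \in g].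
Proof.
move=> xE px xe yE qy ye H.
case: (set_0Vmem (x :&: y)) => [H0|[c]].
  by rewrite (Tdisj xE px xe yE qy ye H0) eqxx in H.
rewrite inE => /andP[cx cy]; have [_ py] := Qedge yE qy ye.
have cp : c != p by apply: contraNneq py => <-.
have [g gV cg] := grp xE px xe cx cp.
by exists c, g.
Qed.

Lemma M (x1 x2 : {set V}) : x1 \in E -> p \in x1 -> x1 != e1 -> x2 \in E -> p \in x2 -> x2 != e1 ->
  T x1 :&: T x2 != set0 -> T x1 = T x2.
Proof.
move=> x1E px1 x1e x2E px2 x2e /set0Pn [g0 /setIP [g0x1 g0x2]].
have g0V : g0 \in VE := subsetP (Tsub x1) _ g0x1.
apply/eqP; apply: contraT => neq.
have x12 : x1 != x2 by apply: contraNneq neq => ->.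
have [y1 [y1E qy1 y1e d1]] := partner x1E px1 x1e.
have [y2 [y2E qy2 y2e d2]] := partner x2E px2 x2e.
have Ty1 := Tcomp x1E px1 x1e y1E qy1 y1e d1.
have Ty2 := Tcomp x2E px2 x2e y2E qy2 y2e d2.
have C1 := Tcard x1E px1 x1e; have C2 := Tcard x2E px2 x2e.
have [a aT2 aT1] : exists2 a, a \in T x2 & a \notin T x1.
  apply/subsetPn; apply: contra neq => sub; rewrite eq_sym eqEcard sub C1 C2 //.
have [ca [ga [cax2 cay1 gaV caga]]] : exists c g, [/\ c \in x2, c \in y1, g \in VE & c \in g].
  apply: meet => //; apply/set0Pn; exists a; rewrite in_setI aT2 Ty1 in_setD aT1 /=.
  exact: (subsetP (Tsub x2) a aT2).
have gaT1 : ga \notin T x1 by have := inT gaV caga cay1; rewrite Ty1 in_setD => /andP[].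
have gaT2 : ga \in T x2 := inT gaV caga cax2.
have [b bT1 bT2] : exists2 b, b \in T x1 & b \notin T x2.
  apply/subsetPn; apply: contra neq => sub; rewrite eqEcard sub C1 C2 //.
have [cb [gb [cbx1 cby2 gbV cbgb]]] : exists c g, [/\ c \in x1, c \in y2, g \in VE & c \in g].
  apply: meet => //; apply/set0Pn; exists b; rewrite in_setI bT1 Ty2 in_setD bT2 /=.
  exact: (subsetP (Tsub x1) b bT1).
have gbT2 : gb \notin T x2 by have := inT gbV cbgb cby2; rewrite Ty2 in_setD => /andP[].
have gbT1 : gb \in T x1 := inT gbV cbgb cbx1.
have [x3 x3P] : exists x3, x3 \in ((Ed p :\ e1) :\ x1) :\ x2.
  apply/set0Pn; rewrite -card_gt0.
  have H0 := cardsD1 e1 (Ed p); rewrite inE e1E pe1 -dE /= in H0.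
  have H1 := cardsD1 x1 (Ed p :\ e1); rewrite !inE x1e x1E px1 /= in H1.
  have H2 := cardsD1 x2 ((Ed p :\ e1) :\ x1); rewrite !inE eq_sym x12 x2e x2E px2 /= in H2.
  by move: dp; rewrite H0 H1 H2 !add1n !ltnS.
move: x3P => /setD1P [x3x2 /setD1P [x3x1 /setD1P [x3e /setIdP [x3E px3]]]].
have g0x3 : g0 \notin T x3.
  apply/negP => g0x3; have := atmost2 g0V.
  have : [set x1; x2; x3] \subset [set x in Ed p :\ e1 | g0 \in T x].
    have inPT (x : {set V}) : x \in E -> p \in x -> x != e1 -> g0 \in T x ->
        x \in [set x in Ed p :\ e1 | g0 \in T x].
      by move=> xE px xe gx; apply/setIdP; split => //; rewrite in_setD1 xe /= inE xE px.
    apply/subsetP => z /setUP[/setUP[]|] /set1P->; exact: inPT.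
  move/subset_leq_card; rewrite -setUA cardsU1 cards2 !inE negb_or x12 eq_sym x3x1 eq_sym x3x2.
  by move=> H3 H4; have := leq_trans H3 H4.
have C3 := Tcard x3E px3 x3e.
have [c1 [g [c1x3 c1y1 gV c1g]]] : exists c g, [/\ c \in x3, c \in y1, g \in VE & c \in g].
  apply: meet => //; apply/negP => /eqP H0.
  have : T x3 \subset T x1 :\ g0.
    apply/subsetP => h hx3; rewrite in_setD1; apply/andP; split.
      by apply: contraNneq g0x3 => <-.
    apply: contraT => hx1; move/setP/(_ h): H0; rewrite in_setI hx3 Ty1 in_setD hx1 /= in_set0.
    by rewrite (subsetP (Tsub x3) h hx3).
  move/subset_leq_card; rewrite C3 => H; have := cardsD1 g0 (T x1).
  by rewrite g0x1 C1 add1n => [[HH]]; rewrite -HH in H.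
have [c2 [g' [c2x3 c2y2 g'V c2g']]] : exists c g, [/\ c \in x3, c \in y2, g \in VE & c \in g].
  apply: meet => //; apply/negP => /eqP H0.
  have : T x3 \subset T x2 :\ g0.
    apply/subsetP => h hx3; rewrite in_setD1; apply/andP; split.
      by apply: contraNneq g0x3 => <-.
    apply: contraT => hx2; move/setP/(_ h): H0; rewrite in_setI hx3 Ty2 in_setD hx2 /= in_set0.
    by rewrite (subsetP (Tsub x3) h hx3).
  move/subset_leq_card; rewrite C3 => H; have := cardsD1 g0 (T x2).
  by rewrite g0x2 C2 add1n => [[HH]]; rewrite -HH in H.
have gT1 : g \notin T x1 by have := inT gV c1g c1y1; rewrite Ty1 in_setD => /andP[].
have g'T2 : g' \notin T x2 by have := inT g'V c2g' c2y2; rewrite Ty2 in_setD => /andP[].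
have [vx2 _] := Pedge x2E px2 x2e; have [vx1 _] := Pedge x1E px1 x1e.
have [_ py1] := Qedge y1E qy1 y1e; have [_ py2] := Qedge y2E qy2 y2e.
have gga : g != ga.
  apply/eqP => gga; subst g; have [gaE _ _ pga qga] := VEP gaV.
  have c1a := uniq_in y1E gaE qy1 qga c1y1 c1g cay1 caga; subst c1.
  have pca : p != ca by apply: contraNneq pga => ->.
  by move/eqP: x3x2; apply; apply: (lin x3E x2E pca).
have g'gb : g' != gb.
  apply/eqP => g'gb; subst g'; have [gbE _ _ pgb qgb] := VEP gbV.
  have c2b := uniq_in y2E gbE qy2 qgb c2y2 c2g' cby2 cbgb; subst c2.
  have pcb : p != cb by apply: contraNneq pgb => ->.
  by move/eqP: x3x1; apply; apply: (lin x3E x1E pcb).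
have gg' : g = g'.
  apply/eqP; apply: contraT => gg'.
  have : size [:: g0; ga; gb; g; g'] <= #|VE|.
    apply: uniq_card.
      rewrite /= !inE !negb_or.
      rewrite (memneq g0x1 gaT1) (memneq g0x2 gbT2) (memneq g0x1 gT1) (memneq g0x2 g'T2).
      rewrite (memneq gaT2 gbT2) eq_sym gga (memneq gaT2 g'T2) (memneq gbT1 gT1) eq_sym g'gb gg'.
      by [].
    move=> h; rewrite 5!in_cons in_nil orbF => /orP[/eqP->|/orP[/eqP->|/orP[/eqP->|/orP[/eqP->|/eqP->]]]]; by [].
  by rewrite cardVE.
subst g'.
have [gE _ _ pg qg] := VEP gV.
have c12 := uniq_in x3E gE px3 pg c1x3 c1g c2x3 c2g'; subst c2.
have qc1 : q != c1 by apply: contraNneq qg => ->.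
have y12 := lin y1E y2E qc1 qy1 c1y1 qy2 c2y2; subst y2.
suff H : T x1 = T x2 by rewrite H eqxx in neq.
apply: (setD_inj (Tsub x1) (Tsub x2)).
by rewrite -Ty1 -Ty2.
Qed.

End Heavy.
Unset Default Proof Using.

Section One.
Variables (v p q p' q' : V) (e1 e2 : {set V}).
Hypotheses (e1E : e1 \in E) (ve1 : v \in e1) (pe1 : p \in e1) (qe1 : q \in e1)
  (vp : v != p) (vq : v != q) (pq : p != q) (dv : d v = 5) (dp : 4 <= d p) (dq : 4 <= d q)
  (e2E : e2 \in E) (ve2 : v \in e2) (p'e2 : p' \in e2) (q'e2 : q' \in e2)
  (vp' : v != p') (vq' : v != q') (p'q' : p' != q') (e12 : e1 != e2).
Set Default Proof Using "All".
Local Notation VE := (Ed v :\ e1).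
Local Notation T := (TT VE).

Lemma classify : exists B : {set {set V}}, [/\ B \subset VE, #|B| = 2, e2 \notin B,
  (forall x, x \in E -> x != e1 -> (p \in x) || (q \in x) -> x :&: e2 = set0 -> T x = B) &
  (forall x, x \in E -> x != e1 -> (p \in x) || (q \in x) -> x :&: e2 != set0 -> T x = VE :\: B)].
Proof.
have qp : q != p by rewrite eq_sym.
have Mp := M e1E ve1 pe1 qe1 vp vq pq dv dp dq.
have Mq := M e1E ve1 qe1 pe1 vq vp qp dv dq dp.
have Cp := Tcard e1E ve1 pe1 qe1 vp vq pq dv dp dq.
have Cq := Tcard e1E ve1 qe1 pe1 vq vp qp dv dq dp.
have Sub := Tsub e1E ve1 pe1 qe1 vp vq pq dv dp dq.
have Ee2 : e2 = [set v; p'; q'] := three_eq (card3 e2E) ve2 p'e2 q'e2 vp' vq' p'q'.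
have p'e1 : p' \notin e1 := other e2E e1E ve2 p'e2 vp' ve1 e12.
have q'e1 : q' \notin e1 := other e2E e1E ve2 q'e2 vq' ve1 e12.
have pp' : p != p' by apply: contraNneq p'e1 => <-.
have pq' : p != q' by apply: contraNneq q'e1 => <-.
have [x0 [x0E px0 x00 x0e]] := @pick_avoid p [set p'; q'] [set e1]
  ltac:(by rewrite !inE negb_or pp' pq') ltac:(by rewrite cards1 cards2 p'q'; clear -dp; lia).
rewrite inE in x0e.
have [vx0 qx0] := Pedge e1E ve1 pe1 qe1 vp vq pq dv dp dq x0E px0 x0e.
have x0e2 : x0 :&: e2 = set0.
  apply: disj => z zx; rewrite Ee2 !inE => /orP[/orP[]|]/eqP ?; subst z.
  - by rewrite zx in vx0.
  - by move/setP/(_ p'): x00; rewrite !inE zx eqxx.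
  - by move/setP/(_ q'): x00; rewrite !inE zx eqxx orbT.
pose B := T x0.
have [y0 [y0E qy0 y0e d0]] := partner e1E ve1 pe1 qe1 vp vq pq dv dp dq x0E px0 x0e.
have Ty0 : T y0 = VE :\: B := Tcomp e1E ve1 pe1 qe1 vp vq pq dv dp dq x0E px0 x0e y0E qy0 y0e d0.
have CB : #|B| = 2 := Cp _ x0E px0 x0e.
have BV : B \subset VE := Sub x0.
have e2V : e2 \in VE by rewrite in_setD1 eq_sym e12 /= inE e2E ve2.
have e2B : e2 \notin B.
  apply/negP => /setIdP [_]; rewrite setIC x0e2; by rewrite eqxx.
have CVB : #|VE :\: B| = 2.
  by rewrite (cardsDS BV) CB (cardVE e1E ve1 pe1 qe1 vp vq pq dv dp dq).
have dich : forall x, x \in E -> x != e1 -> (p \in x) || (q \in x) -> T x = B \/ T x = VE :\: B.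
  move=> x xE xe /orP[px|qx].
    case: (boolP (T x :&: B != set0)) => H.
      by left; apply: (Mp x x0).
    right; apply/eqP; rewrite eqEcard CVB (Cp _ xE px xe) leqnn andbT.
    apply/subsetP => g gx; rewrite in_setD (subsetP (Sub x) g gx) andbT.
    apply/negP => gB; move/negP: H; apply; apply/set0Pn; exists g; by rewrite in_setI gx gB.
  case: (boolP (T x :&: T y0 != set0)) => H.
    by right; rewrite -Ty0; apply: (Mq x y0).
  left; apply/eqP; rewrite eqEcard CB (Cq _ xE qx xe) leqnn andbT.
  apply/subsetP => g gx; apply: contraT => gB.
  exfalso; move/negP: H; apply; apply/set0Pn; exists g; rewrite in_setI gx Ty0 in_setD gB /=.
  exact: (subsetP (Sub x) g gx).
exists B; split => //.
  move=> x xE xe pqx xe2; case: (dich x xE xe pqx) => // Tx.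
  have : e2 \in T x by rewrite Tx in_setD e2B e2V.
  by case/setIdP => _; rewrite setIC xe2 eqxx.
move=> x xE xe pqx xe2; case: (dich x xE xe pqx) => // Tx.
have : e2 \in T x by rewrite inE e2V setIC.
by rewrite Tx (negbTE e2B).
Qed.

End One.

Lemma grid (v : V) (gk gl : {set V}) (W : {set {set V}}) :
  gk \in E -> gl \in E -> v \in gk -> v \in gl -> gk != gl ->
  (forall f, f \in W -> [/\ f \in E, v \notin f, f :&: gk != set0 & f :&: gl != set0]) ->
  #|W| <= 4.
Proof.
move=> gkE glE vk vl kl HW.
pose phi (f : {set V}) := (odflt v [pick u in f :&: gk], odflt v [pick u in f :&: gl]).
have P1 f : f \in W -> (phi f).1 \in f :&: gk.
  move=> fW; have [_ _ H _] := HW f fW; rewrite /phi /=; case: pickP => [u -> //| H0] /=.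
  by case/set0Pn: H => u; rewrite H0.
have P2 f : f \in W -> (phi f).2 \in f :&: gl.
  move=> fW; have [_ _ _ H] := HW f fW; rewrite /phi /=; case: pickP => [u -> //| H0] /=.
  by case/set0Pn: H => u; rewrite H0.
have inj : {in W &, injective phi}.
  move=> f f' fW f'W eqf.
  have [fE vf _ _] := HW f fW; have [f'E _ _ _] := HW f' f'W.
  have := P1 f fW; have := P2 f fW; have := P1 f' f'W; have := P2 f' f'W.
  rewrite -eqf !inE => /andP[l' _] /andP[k' _] /andP[lf lgl] /andP[kf kgk].
  have kl' : (phi f).1 != (phi f).2.
    apply/eqP => e; have kv : (phi f).1 != v by apply: contraNneq vf => <-.
    move/eqP: kl; apply; apply: (lin gkE glE kv) => //; by rewrite e.
  exact: (lin fE f'E kl').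
rewrite -(card_in_imset inj).
have : [set phi f | f in W] \subset setX (gk :\ v) (gl :\ v).
  apply/subsetP => u /imsetP [f fW ->]; have [_ vf _ _] := HW f fW.
  have := P1 f fW; have := P2 f fW; rewrite !inE => /andP[lf lgl] /andP[kf kgk].
  rewrite kgk lgl !andbT; apply/andP; split; [apply: contraNneq vf => <- | apply: contraNneq vf => <-]; by [].
move/subset_leq_card; rewrite cardsX (cardD1_3 gkE vk) (cardD1_3 glE vl); by [].
Qed.

Lemma arith2 (a1 a2 n1 n2 P1 P2 d1 d2 : nat) : d1 = 1 + P1 -> P1 = a1 + n1 -> n1 <= 1 -> 3 < d1 ->
  d2 = 1 + P2 -> P2 = a2 + n2 -> n2 <= 1 -> 3 < d2 -> (a1 + a2).+1 <= 4 -> False.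
Proof. move=> *; lia. Qed.

Section Dbl.
Variables (v o1 o1' o2 o2' : V) (e1 e2 : {set V}) (B : {set {set V}}).
Hypotheses (e1E : e1 \in E) (ve1 : v \in e1) (o1e1 : o1 \in e1) (o1'e1 : o1' \in e1)
  (vo1 : v != o1) (vo1' : v != o1') (o1o1' : o1 != o1') (dv : d v = 5) (do1 : 4 <= d o1) (do1' : 4 <= d o1')
  (e2E : e2 \in E) (ve2 : v \in e2) (o2e2 : o2 \in e2) (o2'e2 : o2' \in e2)
  (vo2 : v != o2) (vo2' : v != o2') (o2o2' : o2 != o2') (do2 : 4 <= d o2) (e12 : e1 != e2)
  (B1 : B \subset Ed v :\ e1) (CB : #|B| = 2)
  (F1 : forall x, x \in E -> x != e1 -> (o1 \in x) || (o1' \in x) -> x :&: e2 = set0 -> TT (Ed v :\ e1) x = B)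
  (F2 : forall x, x \in E -> x != e2 -> (o2 \in x) || (o2' \in x) -> x :&: e1 = set0 -> TT (Ed v :\ e2) x = B).
Set Default Proof Using "All".

Lemma dbl : exists2 z, z \in E & (o1 \in z) && (o2 \in z).
Proof.
case: (boolP [exists z in E, (o1 \in z) && (o2 \in z)]) => [/exists_inP [z zE Hz] | nex]; first by exists z.
exfalso.
have Ee1 : e1 = [set v; o1; o1'] := three_eq (card3 e1E) ve1 o1e1 o1'e1 vo1 vo1' o1o1'.
have Ee2 : e2 = [set v; o2; o2'] := three_eq (card3 e2E) ve2 o2e2 o2'e2 vo2 vo2' o2o2'.
have e21 : e2 != e1 by rewrite eq_sym.
have o2e1 : o2 \notin e1 := other e2E e1E ve2 o2e2 vo2 ve1 e12.
have o2'e1 : o2' \notin e1 := other e2E e1E ve2 o2'e2 vo2' ve1 e12.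
have o1e2 : o1 \notin e2 := other e1E e2E ve1 o1e1 vo1 ve2 e21.
have o1'e2 : o1' \notin e2 := other e1E e2E ve1 o1'e1 vo1' ve2 e21.
have [gk [gl [kl EB]]] : exists gk gl, gk != gl /\ B = [set gk; gl] by apply/cards2P; rewrite CB.
have gkB : gk \in B by rewrite EB !inE eqxx.
have glB : gl \in B by rewrite EB !inE eqxx orbT.
have gkV := subsetP B1 gk gkB; have glV := subsetP B1 gl glB.
move: gkV glV; rewrite !in_setD1 !inE => /and3P[_ gkE vgk] /and3P[_ glE vgl].
have B2 : B \subset Ed v :\ e2.
  apply/subsetP => g gB; have := subsetP B1 g gB; rewrite !in_setD1 => /andP[_ gv]; rewrite gv andbT.
  apply/eqP => ge2; subst g.
  have x0 : exists x, [/\ x \in E, o2 \in x, x != e2 & x :&: e1 = set0].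
    have [x [xE o2x x0 xe]] := @pick_avoid o2 [set o1; o1'] [set e2]
      ltac:(by rewrite !inE negb_or; apply/andP; split; [apply: contraNneq o1e2 => <- | apply: contraNneq o1'e2 => <-])
      ltac:(by rewrite cards1 cards2 o1o1'; clear -do2; lia).
    exists x; split => //; first by rewrite inE in xe.
    rewrite inE in xe; rewrite Ee1; apply: disj => u ux; rewrite !inE => /orP[/orP[]|]/eqP ?; subst u.
    - by move: (other e2E xE o2e2 ve2 ltac:(by rewrite eq_sym) o2x xe); rewrite ux.
    - by move/setP/(_ o1): x0; rewrite !inE ux eqxx.
    - by move/setP/(_ o1'): x0; rewrite !inE ux eqxx orbT.
  case: x0 => x [xE o2x xe xe1]; have := F2 xE xe ltac:(by rewrite o2x) xe1.
  move/setP/(_ e2); rewrite gB; case/setIdP; by rewrite !in_setD1 eqxx.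
have [be [beE o1'be be0 bee]] := @pick_avoid o1' [set o2; o2'] [set e1]
  ltac:(by rewrite !inE negb_or; apply/andP; split; [apply: contraNneq o2e1 => <- | apply: contraNneq o2'e1 => <-])
  ltac:(by rewrite cards1 cards2 o2o2'; clear -do1'; lia).
rewrite inE in bee.
have vbe : v \notin be := other e1E beE o1'e1 ve1 ltac:(by rewrite eq_sym) o1'be bee.
have o1be : o1 \notin be := other e1E beE o1'e1 o1e1 ltac:(by rewrite eq_sym) o1'be bee.
have bee2 : be :&: e2 = set0.
  rewrite Ee2; apply: disj => u ub; rewrite !inE => /orP[/orP[]|]/eqP ?; subst u.
  - by rewrite ub in vbe.
  - by move/setP/(_ o2): be0; rewrite !inE ub eqxx.
  - by move/setP/(_ o2'): be0; rewrite !inE ub eqxx orbT.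
pose A1 := [set x in Ed o1 :\ e1 | x :&: e2 == set0].
pose A2 := [set x in Ed o2 :\ e2 | x :&: e1 == set0].
have inB1 x : x \in E -> TT (Ed v :\ e1) x = B -> x :&: gk != set0 /\ x :&: gl != set0.
  move=> xE Tx; split.
    by have := gkB; rewrite -Tx => /setIdP [_]; rewrite setIC.
  by have := glB; rewrite -Tx => /setIdP [_]; rewrite setIC.
have inB2 x : x \in E -> TT (Ed v :\ e2) x = B -> x :&: gk != set0 /\ x :&: gl != set0.
  move=> xE Tx; split.
    by have := gkB; rewrite -Tx => /setIdP [_]; rewrite setIC.
  by have := glB; rewrite -Tx => /setIdP [_]; rewrite setIC.
have HW := @grid v gk gl (A1 :|: A2 :|: [set be]) gkE glE vgk vgl kl.
have : #|A1 :|: A2 :|: [set be]| <= 4.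
  apply: HW => f; rewrite !inE => /orP[/orP[]|].
  - case/andP => /andP[fe /andP[fE o1f]] /eqP f0.
    have [H1 H2] := inB1 f fE (F1 fE fe ltac:(by rewrite o1f) f0).
    by split => //; apply: (other e1E fE o1e1 ve1 ltac:(by rewrite eq_sym) o1f fe).
  - case/andP => /andP[fe /andP[fE o2f]] /eqP f0.
    have [H1 H2] := inB2 f fE (F2 fE fe ltac:(by rewrite o2f) f0).
    by split => //; apply: (other e2E fE o2e2 ve2 ltac:(by rewrite eq_sym) o2f fe).
  - move/eqP => ->; have [H1 H2] := inB1 be beE (F1 beE bee ltac:(by rewrite o1'be orbT) bee2).
    by split.
have o1o2' : o1 != o2' by apply: contraNneq o2'e1 => <-.
have o2o1' : o2 != o1' by apply: contraNneq o1'e2 => <-.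
have c1 x : x \in Ed o1 :\ e1 -> ~~ (x :&: e2 == set0) -> o2' \in x.
  move=> /setD1P [xe /setIdP [xE o1x]] /set0Pn [z]; rewrite inE => /andP[zx].
  rewrite Ee2 !inE => /orP[/orP[]|]/eqP ?; subst z => //.
    by move: (other e1E xE o1e1 ve1 ltac:(by rewrite eq_sym) o1x xe); rewrite zx.
  by move/negP: nex; case; apply/exists_inP; exists x; rewrite ?xE ?o1x ?zx.
have c2 x : x \in Ed o2 :\ e2 -> ~~ (x :&: e1 == set0) -> o1' \in x.
  move=> /setD1P [xe /setIdP [xE o2x]] /set0Pn [z]; rewrite inE => /andP[zx].
  rewrite Ee1 !inE => /orP[/orP[]|]/eqP ?; subst z => //.
    by move: (other e2E xE o2e2 ve2 ltac:(by rewrite eq_sym) o2x xe); rewrite zx.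
  by move/negP: nex; case; apply/exists_inP; exists x; rewrite ?xE ?o2x ?zx.
have HA1 := card_split (Ed o1 :\ e1) (fun x => x :&: e2 == set0); cbv beta in HA1.
have HA2 := card_split (Ed o2 :\ e2) (fun x => x :&: e1 == set0); cbv beta in HA2.
have D1 := cardsD1 e1 (Ed o1); rewrite inE e1E o1e1 -dE /= in D1.
have D2 := cardsD1 e2 (Ed o2); rewrite inE e2E o2e2 -dE /= in D2.
have L1 : #|[set x in Ed o1 :\ e1 | ~~ (x :&: e2 == set0)]| <= 1.
  apply/card_le1_eqP => x x' /setIdP [xP xn] /setIdP [x'P x'n].
  have := c1 x xP xn; have := c1 x' x'P x'n.
  move: xP x'P => /setD1P [_ /setIdP [xE o1x]] /setD1P [_ /setIdP [x'E o1x']] o2x' o2x.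
  by apply: esym; apply: (lin xE x'E o1o2').
have L2 : #|[set x in Ed o2 :\ e2 | ~~ (x :&: e1 == set0)]| <= 1.
  apply/card_le1_eqP => x x' /setIdP [xP xn] /setIdP [x'P x'n].
  have := c2 x xP xn; have := c2 x' x'P x'n.
  move: xP x'P => /setD1P [_ /setIdP [xE o2x]] /setD1P [_ /setIdP [x'E o2x']] o1x' o1x.
  by apply: esym; apply: (lin xE x'E o2o1').
have A12 : A1 :&: A2 = set0.
  apply: disj => x /setIdP [/setD1P [_ /setIdP [_ o1x]] _] /setIdP [_ /eqP x0].
  by move/setP/(_ o1): x0; rewrite !inE o1x o1e1.
have beA : be \notin A1 :|: A2.
  rewrite in_setU negb_or; apply/andP; split.
    by apply/negP => /setIdP [/setD1P [_ /setIdP [_ o1b]] _]; rewrite o1b in o1be.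
  apply/negP => /setIdP [_ /eqP x0].
  by move/setP/(_ o1'): x0; rewrite !inE o1'be o1'e1.
rewrite setUC cardsU1 beA cardsU A12 cards0 subn0.
move: HA1 HA2; rewrite -/A1 -/A2 => HA1 HA2.
move=> /= H; exact: (arith2 D1 HA1 L1 do1 D2 HA2 L2 do2 H).
Qed.

End Dbl.

Lemma Bchar (v : V) (e z : {set V}) (B : {set {set V}}) :
  B \subset Ed v :\ e -> TT (Ed v :\ e) z = (Ed v :\ e) :\: B -> e :&: z != set0 ->
  forall g, (g \in B) = (g \in Ed v) && (g :&: z == set0).
Proof.
move=> BV Tz ez g; apply/idP/idP.
  move=> gB; have gV := subsetP BV g gB.
  have : g \notin TT (Ed v :\ e) z by rewrite Tz in_setD gB.
  rewrite inE gV /= negbK => ->; move: gV; rewrite in_setD1 => /andP[_ ->] //.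
case/andP => gv gz.
have ge : g != e by apply: contraTneq gz => ->.
have gV : g \in Ed v :\ e by rewrite in_setD1 ge gv.
apply: contraT => gB.
have : g \in TT (Ed v :\ e) z by rewrite Tz in_setD gB gV.
by rewrite inE gV gz.
Qed.

Lemma beta_ex (v o a b : V) (e1 e2 : {set V}) : e1 \in E -> e2 \in E -> e2 = [set v; a; b] ->
  v \in e1 -> o \in e1 -> v != o -> o \notin e2 -> a != b -> 4 <= d o ->
  exists be, [/\ be \in E, o \in be, be != e1 & be :&: e2 = set0].
Proof.
move=> e1E e2E Ee2 ve1 oe1 vo oe2 ab dO.
have oa : o != a by apply: contraNneq oe2 => ->; rewrite Ee2 !inE eqxx orbT.
have ob : o != b by apply: contraNneq oe2 => ->; rewrite Ee2 !inE eqxx orbT.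
have [be [beE obe be0 bee]] := @pick_avoid o [set a; b] [set e1]
  ltac:(by rewrite !inE negb_or oa ob) ltac:(by rewrite cards1 cards2 ab; clear -dO; lia).
rewrite inE in bee.
have vbe : v \notin be := other e1E beE oe1 ve1 ltac:(by rewrite eq_sym) obe bee.
exists be; split => //.
rewrite Ee2; apply: disj => u ub; rewrite !inE => /orP[/orP[]|]/eqP ?; subst u.
- by rewrite ub in vbe.
- by move/setP/(_ a): be0; rewrite !inE ub eqxx.
- by move/setP/(_ b): be0; rewrite !inE ub eqxx orbT.
Qed.

Lemma TTdisj (VE B : {set {set V}}) (g x : {set V}) : g \in VE -> g \notin B -> TT VE x = B -> g :&: x = set0.
Proof. move=> gV gB Tx; apply/eqP; apply: contraNT gB => H; by rewrite -Tx inE gV H. Qed.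

Lemma same_edge (b b' : {set V}) x y : b \in E -> b' \in E -> x != y ->
  x \in b -> y \in b -> x \in b' -> y \in b' -> b != b' -> False.
Proof. move=> bE b'E xy xb yb xb' yb' bb; by move/eqP: bb; apply; apply: (lin bE b'E xy). Qed.

Lemma pairs (bp b : {set V}) p k1 k2 l1 l2 k l : bp \in E -> b \in E -> bp = [set p; k1; l1] ->
  k1 != l1 -> p \notin b -> b != bp -> b :&: bp != set0 -> k \in b -> l \in b ->
  (k == k1) || (k == k2) -> (l == l1) || (l == l2) ->
  ((k1 \in b) && (l2 \in b)) || ((k2 \in b) && (l1 \in b)).
Proof.
move=> bpE bE Ebp k1l1 pb bbp /set0Pn [c]; rewrite inE => /andP[cb]; rewrite Ebp !inE.
have bp1 : k1 \in bp by rewrite Ebp !inE eqxx orbT.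
have bp2 : l1 \in bp by rewrite Ebp !inE eqxx orbT.
case/orP => [/orP[]|] /eqP ?; subst c; first by rewrite cb in pb.
  move=> kb lb _ /orP[]/eqP ?; subst l.
    by exfalso; apply: (same_edge bE bpE k1l1 cb lb bp1 bp2 bbp).
  by rewrite cb lb.
move=> kb lb /orP[]/eqP ? _; subst k.
  by exfalso; apply: (same_edge bE bpE k1l1 kb cb bp1 bp2 bbp).
by rewrite kb cb orbT.
Qed.

Lemma other_pt (g : {set V}) v k1 : g \in E -> v \in g -> k1 \in g -> k1 != v ->
  exists k2, [/\ k2 \in g, k2 != v, k2 != k1 &
    forall k, k \in g -> k != v -> (k == k1) || (k == k2)].
Proof.
move=> gE vg k1g k1v; have [a [b [Eg va vb ab]]] := three (card3 gE) vg.
move: (k1g); rewrite Eg !inE (negbTE k1v) /= => /orP[]/eqP ?; subst k1.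
  exists b; split; [by rewrite !inE eqxx ?orbT | by rewrite eq_sym | by rewrite eq_sym |].
  move=> k; rewrite !inE => /orP[/orP[]|] /eqP -> kv; rewrite ?eqxx ?orbT //.
  by rewrite eqxx in kv.
exists a; split; [by rewrite !inE eqxx ?orbT | by rewrite eq_sym | by [] |].
move=> k; rewrite !inE => /orP[/orP[]|] /eqP -> kv; rewrite ?eqxx ?orbT //.
by rewrite eqxx in kv.
Qed.

Section Final.
Variables (v p q p' q' : V) (e1 e2 : {set V}).
Hypotheses (e1E : e1 \in E) (ve1 : v \in e1) (pe1 : p \in e1) (qe1 : q \in e1)
  (vp : v != p) (vq : v != q) (pq : p != q) (dv : d v = 5) (dp : 4 <= d p) (dq : 4 <= d q)
  (e2E : e2 \in E) (ve2 : v \in e2) (p'e2 : p' \in e2) (q'e2 : q' \in e2)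
  (vp' : v != p') (vq' : v != q') (p'q' : p' != q') (dp' : 4 <= d p') (dq' : 4 <= d q') (e12 : e1 != e2).
Set Default Proof Using "All".

Lemma final : False.
Proof.
have qp : q != p by rewrite eq_sym.
have q'p' : q' != p' by rewrite eq_sym.
have e21 : e2 != e1 by rewrite eq_sym.
have Ee1 := three_eq (card3 e1E) ve1 pe1 qe1 vp vq pq.
have Ee2 := three_eq (card3 e2E) ve2 p'e2 q'e2 vp' vq' p'q'.
have p'e1 : p' \notin e1 := other e2E e1E ve2 p'e2 vp' ve1 e12.
have q'e1 : q' \notin e1 := other e2E e1E ve2 q'e2 vq' ve1 e12.
have pe2 : p \notin e2 := other e1E e2E ve1 pe1 vp ve2 e21.
have qe2 : q \notin e2 := other e1E e2E ve1 qe1 vq ve2 e21.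
have [B [BV CB e2B F1a F1b]] :=
  classify e1E ve1 pe1 qe1 vp vq pq dv dp dq e2E ve2 p'e2 q'e2 vp' vq' p'q' e12.
have [B' [B'V CB' e1B' F2a F2b]] :=
  classify e2E ve2 p'e2 q'e2 vp' vq' p'q' dv dp' dq' e1E ve1 pe1 qe1 vp vq pq e21.
have [z zP ze1] : exists2 z, z \in Ed p' :\ e2 & z :&: e1 != set0.
  apply/exists_inP; apply: contraT => nex; exfalso.
  have [g gB'] : exists g, g \in B' by apply/set0Pn; rewrite -card_gt0 CB'.
  have gV := subsetP B'V g gB'.
  have H2 := atmost2 e2E ve2 p'e2 q'e2 vp' vq' p'q' dv dp' dq' gV.
  have : Ed p' :\ e2 \subset [set x in Ed p' :\ e2 | g \in TT (Ed v :\ e2) x].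
    apply/subsetP => x xP; apply/setIdP; split => //.
    move: (xP) => /setD1P [xe /setIdP [xE p'x]].
    have xe1 : x :&: e1 = set0.
      by apply/eqP; apply: contraNT nex => H; apply/exists_inP; exists x.
    by rewrite (F2a x xE xe ltac:(by rewrite p'x) xe1).
  move/subset_leq_card => H3; have H4 := leq_trans H3 H2.
  have := cardsD1 e2 (Ed p'); rewrite inE e2E p'e2 -dE /= => D.
  by move: dp'; rewrite D add1n ltnS => H5; have := leq_trans H5 H4.
move: zP => /setD1P [ze2 /setIdP [zE p'z]].
have vz : v \notin z := other e2E zE p'e2 ve2 ltac:(by rewrite eq_sym) p'z ze2.
have pqz : (p \in z) || (q \in z).
  case/set0Pn: ze1 => c; rewrite inE Ee1 !inE => /andP[cz /orP[/orP[]|]]/eqP ?; subst c;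
    [by rewrite cz in vz | by rewrite cz | by rewrite cz orbT].
have ze1' : z != e1 by apply: contraNneq p'e1 => <-.
have z2 : z :&: e2 != set0 by apply/set0Pn; exists p'; rewrite inE p'z p'e2.
have Tz1 := F1b z zE ze1' pqz z2.
have Tz2 := F2b z zE ze2 ltac:(by rewrite p'z) ze1.
have BB : B' = B.
  apply/setP => g; rewrite (Bchar B'V Tz2 _ g) ?(Bchar BV Tz1 _ g) // setIC //.
subst B'.
have [ej ejD eje2] : exists2 ej, ej \in (Ed v :\ e1) :\: B & ej != e2.
  have C2 : #|(Ed v :\ e1) :\: B| = 2.
    by rewrite (cardsDS BV) CB (cardVE e1E ve1 pe1 qe1 vp vq pq dv dp dq).
  have [g1 [g2 [g12 E12]]] : exists g1 g2, g1 != g2 /\ (Ed v :\ e1) :\: B = [set g1; g2].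
    by apply/cards2P; rewrite C2.
  case: (eqVneq g1 e2) => [g1e|g1e]; [exists g2 | exists g1]; rewrite ?E12 ?inE ?eqxx ?orbT //.
  by subst g1; rewrite eq_sym.
move: ejD; rewrite in_setD => /andP[ejB ejV1].
have [ejE vej ej1 pej qej] := VEP e1E ve1 pe1 qe1 vp vq pq dv dp dq ejV1.
have ejV2 : ej \in Ed v :\ e2.
  by rewrite in_setD1 eje2; move: ejV1; rewrite in_setD1 => /andP[_ ->].
have [_ _ _ p'ej q'ej] := VEP e2E ve2 p'e2 q'e2 vp' vq' p'q' dv dp' dq' ejV2.
have [bp [bpE pbp bpe bp0]] := beta_ex e1E e2E Ee2 ve1 pe1 vp pe2 p'q' dp.
have [bq [bqE qbq bqe bq0]] := beta_ex e1E e2E Ee2 ve1 qe1 vq qe2 p'q' dq.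
have [bp' [bp'E p'bp' bp'e bp'0]] := beta_ex e2E e1E Ee1 ve2 p'e2 vp' p'e1 pq dp'.
have [bq' [bq'E q'bq' bq'e bq'0]] := beta_ex e2E e1E Ee1 ve2 q'e2 vq' q'e1 pq dq'.
have Tbp := F1a bp bpE bpe ltac:(by rewrite pbp) bp0.
have Tbq := F1a bq bqE bqe ltac:(by rewrite qbq orbT) bq0.
have Tbp' := F2a bp' bp'E bp'e ltac:(by rewrite p'bp') bp'0.
have Tbq' := F2a bq' bq'E bq'e ltac:(by rewrite q'bq' orbT) bq'0.
have ejbp := TTdisj ejV1 ejB Tbp.
have ejbq := TTdisj ejV1 ejB Tbq.
have ejbp' := TTdisj ejV2 ejB Tbp'.
have ejbq' := TTdisj ejV2 ejB Tbq'.
have Ipq : bp :&: bq != set0.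
  apply/negP => /eqP H; exact: (crown3 e1E ve1 pe1 qe1 vp vq pq ejE bpE bqE vej pbp qbq ejbp ejbq H).
have Ip'q' : bp' :&: bq' != set0.
  apply/negP => /eqP H; exact: (crown3 e2E ve2 p'e2 q'e2 vp' vq' p'q' ejE bp'E bq'E vej p'bp' q'bq' ejbp' ejbq' H).
have cross (zz bo bo' : {set V}) o o' : zz \in E -> o \in zz -> o' \in zz -> (o == p) || (o == q) ->
    (o' == p') || (o' == q') -> bo \in E -> bo' \in E -> o \in bo -> o' \in bo' ->
    ej :&: bo = set0 -> ej :&: bo' = set0 -> bo :&: bo' != set0.
  move=> zzE ozz o'zz oo o'o boE bo'E obo o'bo' ejbo ejbo'; apply/negP => /eqP H.
  have oe1 : o \in e1 by case/orP: oo => /eqP ->.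
  have o'e2 : o' \in e2 by case/orP: o'o => /eqP ->.
  have oej : o \notin ej by case/orP: oo => /eqP ->.
  have o'ej : o' \notin ej by case/orP: o'o => /eqP ->.
  have o'e1 : o' \notin e1 by case/orP: o'o => /eqP ->.
  have oo' : o != o' by apply: contraNneq o'e1 => <-.
  have zze1 : zz != e1 by apply: contraNneq o'e1 => <-.
  have pqzz : (p \in zz) || (q \in zz) by case/orP: oo => /eqP <-; rewrite ozz ?orbT.
  have zz2 : zz :&: e2 != set0 by apply/set0Pn; exists o'; rewrite inE o'zz o'e2.
  have Tzz := F1b zz zzE zze1 pqzz zz2.
  have : ej \in TT (Ed v :\ e1) zz by rewrite Tzz in_setD ejB ejV1.
  case/setIdP => _ /set0Pn [a]; rewrite inE => /andP[aej azz].
  have ao : a != o by apply: contraNneq oej => <-.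
  have ao' : a != o' by apply: contraNneq o'ej => <-.
  exact: (crown3 zzE azz ozz o'zz ao ao' oo' ejE boE bo'E aej obo o'bo' ejbo ejbo' H).
have F1s : forall x, x \in E -> x != e1 -> (q \in x) || (p \in x) -> x :&: e2 = set0 ->
    TT (Ed v :\ e1) x = B by move=> x xE xe h; apply: F1a => //; rewrite orbC.
have F2s : forall x, x \in E -> x != e2 -> (q' \in x) || (p' \in x) -> x :&: e1 = set0 ->
    TT (Ed v :\ e2) x = B by move=> x xE xe h; apply: F2a => //; rewrite orbC.
have [zA zAE /andP[pzA p'zA]] :=
  dbl e1E ve1 pe1 qe1 vp vq pq dv dp dq e2E ve2 p'e2 q'e2 vp' vq' p'q' dp' e12 BV CB F1a F2a.
have [zB zBE /andP[pzB q'zB]] :=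
  dbl e1E ve1 pe1 qe1 vp vq pq dv dp dq e2E ve2 q'e2 p'e2 vq' vp' q'p' dq' e12 BV CB F1a F2s.
have [zC zCE /andP[qzC p'zC]] :=
  dbl e1E ve1 qe1 pe1 vq vp qp dv dq dp e2E ve2 p'e2 q'e2 vp' vq' p'q' dp' e12 BV CB F1s F2a.
have [zD zDE /andP[qzD q'zD]] :=
  dbl e1E ve1 qe1 pe1 vq vp qp dv dq dp e2E ve2 q'e2 p'e2 vq' vp' q'p' dq' e12 BV CB F1s F2s.
have Ipp' := cross zA bp bp' p p' zAE pzA p'zA ltac:(by rewrite eqxx) ltac:(by rewrite eqxx) bpE bp'E pbp p'bp' ejbp ejbp'.
have Ipq' := cross zB bp bq' p q' zBE pzB q'zB ltac:(by rewrite eqxx) ltac:(by rewrite eqxx orbT) bpE bq'E pbp q'bq' ejbp ejbq'.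
have Iqp' := cross zC bq bp' q p' zCE qzC p'zC ltac:(by rewrite eqxx orbT) ltac:(by rewrite eqxx) bqE bp'E qbq p'bp' ejbq ejbp'.
have Iqq' := cross zD bq bq' q q' zDE qzD q'zD ltac:(by rewrite eqxx orbT) ltac:(by rewrite eqxx orbT) bqE bq'E qbq q'bq' ejbq ejbq'.
have [gk [gl [kl EB]]] : exists gk gl, gk != gl /\ B = [set gk; gl] by apply/cards2P; rewrite CB.
have gkB : gk \in B by rewrite EB !inE eqxx.
have glB : gl \in B by rewrite EB !inE eqxx orbT.
have [gkE vgk _ pgk qgk] := VEP e1E ve1 pe1 qe1 vp vq pq dv dp dq (subsetP BV gk gkB).
have [glE vgl _ pgl qgl] := VEP e1E ve1 pe1 qe1 vp vq pq dv dp dq (subsetP BV gl glB).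
have meetk (b : {set V}) VE : TT VE b = B -> exists2 k, k \in b & k \in gk.
  by move=> Tb; have := gkB; rewrite -Tb => /setIdP [_ /set0Pn [k]]; rewrite inE => /andP[kg kb]; exists k.
have meetl (b : {set V}) VE : TT VE b = B -> exists2 l, l \in b & l \in gl.
  by move=> Tb; have := glB; rewrite -Tb => /setIdP [_ /set0Pn [l]]; rewrite inE => /andP[lg lb]; exists l.
have difkl x y : x \in gk -> y \in gl -> x != v -> x != y.
  move=> xk yl xv; apply/eqP => xy; subst y; move/eqP: kl; apply.
  exact: (lin gkE glE xv).
have vbp : v \notin bp := other e1E bpE pe1 ve1 ltac:(by rewrite eq_sym) pbp bpe.
have vbq : v \notin bq := other e1E bqE qe1 ve1 ltac:(by rewrite eq_sym) qbq bqe.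
have vbp' : v \notin bp' := other e2E bp'E p'e2 ve2 ltac:(by rewrite eq_sym) p'bp' bp'e.
have vbq' : v \notin bq' := other e2E bq'E q'e2 ve2 ltac:(by rewrite eq_sym) q'bq' bq'e.
have [k1 k1bp k1g] := meetk bp _ Tbp.
have [l1 l1bp l1g] := meetl bp _ Tbp.
have k1v : k1 != v by apply: contraNneq vbp => <-.
have l1v : l1 != v by apply: contraNneq vbp => <-.
have k1l1 : k1 != l1 := difkl _ _ k1g l1g k1v.
have pk1 : p != k1 by apply: contraNneq pgk => ->.
have pl1 : p != l1 by apply: contraNneq pgl => ->.
have Ebp := three_eq (card3 bpE) pbp k1bp l1bp pk1 pl1 k1l1.
have [k2 [k2g k2v k21 Hk]] := other_pt gkE vgk k1g k1v.
have [l2 [l2g l2v l21 Hl]] := other_pt glE vgl l1g l1v.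
have k1l2 : k1 != l2 := difkl _ _ k1g l2g k1v.
have k2l1 : k2 != l1 := difkl _ _ k2g l1g k2v.
have pbq : p \notin bq := other e1E bqE qe1 pe1 qp qbq bqe.
have pbp' : p \notin bp' by apply/negP => H; move/setP/(_ p): bp'0; rewrite !inE H pe1.
have pbq' : p \notin bq' by apply/negP => H; move/setP/(_ p): bq'0; rewrite !inE H pe1.
have qbp' : q \notin bp' by apply/negP => H; move/setP/(_ q): bp'0; rewrite !inE H qe1.
have qbq' : q \notin bq' by apply/negP => H; move/setP/(_ q): bq'0; rewrite !inE H qe1.
have p'bq' : p' \notin bq' := other e2E bq'E q'e2 p'e2 q'p' q'bq' bq'e.
have nbq : bq != bp by apply: contraNneq pbq => ->.
have nbp' : bp' != bp by apply: contraNneq pbp' => ->.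
have nbq' : bq' != bp by apply: contraNneq pbq' => ->.
have n1 : bq != bp' by apply: contraNneq qbp' => <-.
have n2 : bq != bq' by apply: contraNneq qbq' => <-.
have n3 : bp' != bq' by apply: contraNneq p'bq' => <-.
have R (b : {set V}) VE : b \in E -> TT VE b = B -> v \notin b -> p \notin b -> b != bp ->
    b :&: bp != set0 -> ((k1 \in b) && (l2 \in b)) || ((k2 \in b) && (l1 \in b)).
  move=> bE Tb vb pb bbp I.
  have [k kb kg] := meetk b _ Tb; have [l lb lg] := meetl b _ Tb.
  have kv : k != v by apply: contraNneq vb => <-.
  have lv : l != v by apply: contraNneq vb => <-.
  exact: (pairs bpE bE Ebp k1l1 pb bbp I kb lb (Hk k kg kv) (Hl l lg lv)).
have Rq := R bq _ bqE Tbq vbq pbq nbq ltac:(by rewrite setIC).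
have Rp' := R bp' _ bp'E Tbp' vbp' pbp' nbp' ltac:(by rewrite setIC).
have Rq' := R bq' _ bq'E Tbq' vbq' pbq' nbq' ltac:(by rewrite setIC).
case/orP: Rq => /andP[a1 a2]; case/orP: Rp' => /andP[b1 b2]; case/orP: Rq' => /andP[c1 c2];
  first [ exact: (same_edge bqE bp'E k1l2 a1 a2 b1 b2 n1)
        | exact: (same_edge bqE bq'E k1l2 a1 a2 c1 c2 n2)
        | exact: (same_edge bp'E bq'E k1l2 b1 b2 c1 c2 n3)
        | exact: (same_edge bqE bp'E k2l1 a1 a2 b1 b2 n1)
        | exact: (same_edge bqE bq'E k2l1 a1 a2 c1 c2 n2)
        | exact: (same_edge bp'E bq'E k2l1 b1 b2 c1 c2 n3) ].
Qed.

End Final.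



Definition hasH (e : {set V}) := [exists y in e, 6 <= d y].
Definition adjH x := [exists f in Ed x, hasH f].
Definition heavy (e : {set V}) x := [forall y in e, (y != x) ==> (4 <= d y <= 5)].

Definition Wb (k : nat) (hH adj hv : bool) : nat :=
  if 6 <= k then 0 else
  match k with
  | 1 => 120 | 2 => 60
  | 3 => if hH then 42 else if adj then 36 else 40
  | 4 => 30
  | 5 => if hv then 32 else 22
  | _ => 0 end.

Definition w (e : {set V}) x := Wb (d x) (hasH e) (adjH x) (heavy e x).

Lemma arith (da db dc : nat) (xa xb xc : bool) :
  0 < da -> 0 < db -> 0 < dc ->
  ~~ [&& 6 <= da, 2 <= db & 4 <= dc] -> ~~ [&& 6 <= da, 2 <= dc & 4 <= db] ->
  ~~ [&& 6 <= db, 2 <= da & 4 <= dc] -> ~~ [&& 6 <= db, 2 <= dc & 4 <= da] ->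
  ~~ [&& 6 <= dc, 2 <= da & 4 <= db] -> ~~ [&& 6 <= dc, 2 <= db & 4 <= da] ->
  ~~ [&& da == 3, db == 5, dc == 5 & xa] ->
  ~~ [&& db == 3, da == 5, dc == 5 & xb] ->
  ~~ [&& dc == 3, da == 5, db == 5 & xc] ->
  84 <= Wb da [|| 6 <= da, 6 <= db | 6 <= dc] xa ((4 <= db <= 5) && (4 <= dc <= 5))
      + Wb db [|| 6 <= da, 6 <= db | 6 <= dc] xb ((4 <= da <= 5) && (4 <= dc <= 5))
      + Wb dc [|| 6 <= da, 6 <= db | 6 <= dc] xc ((4 <= da <= 5) && (4 <= db <= 5)).
Proof.
case: da => [|[|[|[|[|[|da]]]]]] //;
case: db => [|[|[|[|[|[|db]]]]]] //;
case: dc => [|[|[|[|[|[|dc]]]]]] //;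
case: xa; case: xb; case: xc => //.
Qed.

Lemma sum3 (F : V -> nat) a b c : a != b -> a != c -> b != c ->
  \sum_(x in [set a; b; c]) F x = F a + F b + F c.
Proof.
move=> ab ac bc; rewrite -setUA big_setU1 /=; last by rewrite !inE negb_or ab ac.
by rewrite big_setU1 /= ?big_set1 ?addnA // inE.
Qed.

Lemma deg_pos e x : e \in E -> x \in e -> 0 < d x.
Proof. by move=> eE xe; rewrite dE card_gt0; apply/set0Pn; exists e; rewrite inE eE xe. Qed.

Lemma edge_ok e : e \in E -> 84 <= \sum_(x in e) w e x.
Proof.
move=> eE.
have [a ae] : exists a, a \in e.
  by apply/set0Pn; rewrite -card_gt0 (card3 eE).
have [b [c [Ee ab ac bc]]] := three (card3 eE) ae.
have be : b \in e by rewrite Ee !inE eqxx !orbT.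
have ce : c \in e by rewrite Ee !inE eqxx !orbT.
rewrite Ee sum3 // /w.
have hH : hasH [set a; b; c] = [|| 6 <= d a, 6 <= d b | 6 <= d c].
  apply/existsP/idP => [[y /andP[]]|].
    by rewrite !inE => /orP[/orP[]|]/eqP-> ->; rewrite ?orbT.
  case/or3P => H; [exists a | exists b | exists c]; by rewrite !inE eqxx ?orbT.
have hv u1 u2 u3 : u1 != u2 -> u1 != u3 -> [set a; b; c] = [set u1; u2; u3] ->
    heavy [set a; b; c] u1 = (4 <= d u2 <= 5) && (4 <= d u3 <= 5).
  move=> n12 n13 ->; apply/forall_inP/andP => [H|[H2 H3] y].
    by split; apply: (implyP (H _ _)); rewrite ?inE ?eqxx ?orbT // eq_sym.
  rewrite !inE => /orP[/orP[]|]/eqP->; by rewrite ?eqxx // ?H2 ?H3 ?implybT.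
rewrite (hv a b c) // (hv b a c) 1?eq_sym //; last by apply/setP => z; rewrite !inE; case: (z == a); case: (z == b).
rewrite (hv c a b) 1?eq_sym //; last by apply/setP => z; rewrite !inE; case: (z == a); case: (z == b); case: (z == c).
rewrite hH.
have nH (h u v : V) : h \in e -> u \in e -> v \in e -> h != u -> h != v -> u != v ->
    ~~ [&& 6 <= d h, 2 <= d u & 4 <= d v].
  by move=> he ue ve hu hv' uv; apply/negP => /and3P[h1 h2 h3]; exact: (Hedge eE he ue ve hu hv' uv h1 h2 h3).
have nQ (x u v : V) : x \in e -> u \in e -> v \in e -> x != u -> x != v -> u != v ->
    ~~ [&& d x == 3, d u == 5, d v == 5 & adjH x].
  move=> xe ue ve xu xv uv; apply/negP => /and4P[/eqP h1 /eqP h2 /eqP h3 /exists_inP [f]].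
  rewrite inE => /andP[fE xf] /exists_inP [h hf dh].
  exact: (LQ eE xe ue ve xu xv uv h2 h3 h1 fE xf hf dh).
apply: arith; try exact: (deg_pos eE); try (apply: nH => //; by rewrite eq_sym);
  try (apply: nQ => //; by rewrite eq_sym).
all: by rewrite eq_sym.
Qed.


Lemma sum_if (A : {set {set V}}) (P : pred {set V}) a b :
  \sum_(e in A) (if P e then a else b) =
  a * #|[set e in A | P e]| + b * #|[set e in A | ~~ P e]|.
Proof.
rewrite (bigID P) /=; congr (_ + _).
  rewrite (eq_bigl (fun e => e \in [set e in A | P e])); last by move=> e; rewrite inE.
  by rewrite (eq_bigr (fun _ => a)) ?sum_nat_const 1?mulnC // => e; rewrite inE => /andP[_ ->].
rewrite (eq_bigl (fun e => e \in [set e in A | ~~ P e])); last by move=> e; rewrite inE.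
by rewrite (eq_bigr (fun _ => b)) ?sum_nat_const 1?mulnC // => e; rewrite inE => /andP[_ /negbTE ->].
Qed.

Definition Hs := [set y | 6 <= d y].

Definition L1prop := forall v e1 e2, d v = 5 -> e1 \in Ed v -> e2 \in Ed v ->
  heavy e1 v -> heavy e2 v -> e1 = e2.

Lemma vert_ok (HL1 : L1prop) (HH2 : #|Hs| <= 2) x : d x <= 5 -> \sum_(e in Ed x) w e x <= 120.
Proof.
rewrite /w => Hx; case Hd: (d x) Hx => [|[|[|[|[|[|k]]]]]] // _;
  rewrite /Wb /= ?sum_nat_const -?dE ?Hd //.
- case Ha: (adjH x).
    have -> : \sum_(e in Ed x) (if hasH e then 42 else 36) =
      42 * #|[set e in Ed x | hasH e]| + 36 * #|[set e in Ed x | ~~ hasH e]| by rewrite sum_if.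
    have := card_split (Ed x) hasH; rewrite -dE Hd => Hs3.
    have : #|[set e in Ed x | hasH e]| <= 2.
      apply: leq_trans HH2; apply: leq_trans (avoid (x := x) (S := Hs) _).
        apply: subset_leq_card; apply/subsetP => e; rewrite !inE => /andP[/andP[eE xe]] /exists_inP [y ye dy].
        by rewrite eE xe /=; apply/set0Pn; exists y; rewrite !inE ye dy.
      by rewrite inE Hd.
    move=> H2; clear -Hs3 H2; lia.
  rewrite (eq_bigr (fun _ => 40)) ?sum_nat_const -?dE ?Hd //.
  move=> e ex; case He: (hasH e) => //; exfalso; move/negbT/negP: Ha; apply; apply/exists_inP; by exists e.
- have -> : \sum_(e in Ed x) (if heavy e x then 32 else 22) =
      32 * #|[set e in Ed x | heavy e x]| + 22 * #|[set e in Ed x | ~~ heavy e x]| by rewrite sum_if.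
  have := card_split (Ed x) (heavy^~ x); rewrite -dE Hd => Hs5.
  have : #|[set e in Ed x | heavy e x]| <= 1.
    apply/card_le1_eqP => e1 e2; rewrite !inE => /andP[e1x h1] /andP[e2x h2].
    by apply: (HL1 x) => //; rewrite inE.
  move=> H1; clear -Hs5 H1; lia.
Qed.


Lemma L1 : L1prop.
Proof.
move=> v e1 e2 dv /setIdP [e1E ve1] /setIdP [e2E ve2] h1 h2.
apply/eqP; apply: contraT => e12; exfalso.
have [p [q [Ee1 vp vq pq]]] := three (card3 e1E) ve1.
have [p' [q' [Ee2 vp' vq' p'q']]] := three (card3 e2E) ve2.
have pe1 : p \in e1 by rewrite Ee1 !inE eqxx !orbT.
have qe1 : q \in e1 by rewrite Ee1 !inE eqxx !orbT.
have p'e2 : p' \in e2 by rewrite Ee2 !inE eqxx !orbT.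
have q'e2 : q' \in e2 by rewrite Ee2 !inE eqxx !orbT.
have hv (e : {set V}) y : heavy e v -> y \in e -> v != y -> 4 <= d y.
  by move=> /forall_inP H ye vy; have := H y ye; rewrite eq_sym vy /= => /andP[].
exact: (final e1E ve1 pe1 qe1 vp vq pq dv (hv _ _ h1 pe1 vp) (hv _ _ h1 qe1 vq)
  e2E ve2 p'e2 q'e2 vp' vq' p'q' (hv _ _ h2 p'e2 vp') (hv _ _ h2 q'e2 vq') e12).
Qed.

Lemma main_bound (HL1 : L1prop) (HH2 : #|Hs| <= 2) : 7 * #|E| <= 10 * #|~: Hs|.
Proof.
have H1 : 84 * #|E| <= \sum_(e in E) \sum_(x in e) w e x.
  by rewrite mulnC -sum_nat_const; apply: leq_sum => e eE; exact: edge_ok.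
have H2 : \sum_(e in E) \sum_(x in e) w e x = \sum_x \sum_(e in Ed x) w e x.
  rewrite (eq_bigr (fun e : {set V} => \sum_(x : V) (if x \in e then w e x else 0))); last by move=> e _; rewrite big_mkcond.
  rewrite exchange_big /=; apply: eq_bigr => x _.
  rewrite big_mkcond [RHS]big_mkcond /=; apply: eq_bigr => e _; rewrite inE.
  by case: (e \in E); case: (x \in e).
have H3 : \sum_x \sum_(e in Ed x) w e x <= \sum_x (if 6 <= d x then 0 else 120).
  apply: leq_sum => x _; case: ifP => h6.
    by rewrite big1 // => e _; rewrite /w /Wb h6.
  by apply: vert_ok => //; rewrite leqNgt h6.
have H4 : \sum_x (if 6 <= d x then 0 else 120) = 120 * #|~: Hs|.
  rewrite big_mkcond /= (bigID (fun x => 6 <= d x)) /= big1 ?add0n; last by move=> x ->.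
  rewrite (eq_bigl (fun x => x \in ~: Hs)); last by move=> x; rewrite !inE.
  rewrite (eq_bigr (fun _ => 120)) ?sum_nat_const 1?mulnC //.
  by move=> x; rewrite !inE => /negbTE ->.
move: H1; rewrite H2 => H1; have H5 := leq_trans H1 (leq_trans H3 (eq_leq H4)).
clear -H5; lia.
Qed.

End Crown.

Theorem theorem1p2_from_L1 (V : finType) (E : {set {set V}}) :
  linear_3graph E -> crown_free E -> L1prop E ->
  #|[set v : V | 6 <= deg E v]| <= 2 ->
  7 * #|E| <= 10 * (#|V| - #|[set v : V | 6 <= deg E v]|).
Proof.
move=> Hlin Hcf HL1 HH2.
have := main_bound Hlin Hcf HL1 HH2.
by rewrite (cardsCs (~: Hs E)) setCK.
Qed.

Theorem theorem1p2 (V : finType) (E : {set {set V}}) :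
  linear_3graph E -> crown_free E ->
  #|[set v : V | 6 <= deg E v]| <= 2 ->
  7 * #|E| <= 10 * (#|V| - #|[set v : V | 6 <= deg E v]|).
Proof.
move=> Hlin Hcf HH2; apply: theorem1p2_from_L1 => //; exact: L1.
Qed.
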